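(* Let $f:\mathbb{R}^n\times\mathbb{R}^p\to[-\infty,\infty]$ be a proper nearly convex function and let $\mathcal{P}_2(x,y)=y$. Suppose $0\in\operatorname{ri}\big(\mathcal{P}_2(\operatorname{dom} f)\big)$. Then $\mathcal{V}=\mathcal{V}_d$, where $\mathcal{V}=\inf\{f(x,0):x\in\mathbb{R}^n\}$ and $\mathcal{V}_d=\sup\{-f^*(0,y^* ):y^*\in\mathbb{R}^p\}$.
   Context: A set $\Omega$ is nearly convex if there is a convex set $C$ with $C\subset\Omega\subset\overline{C}$; $\operatorname{ri}\Omega=\{a\in\Omega:\exists\delta>0,\ B(a;\delta)\cap\operatorname{aff}\Omega\subset\Omega\}$. A function is nearly convex if its epigraph is nearly convex, proper if its domain $\{f<\infty\}$ is nonempty and $f>-\infty$. Fenchel conjugate $f^*(u,v)=\sup_{(x,y)}\{\langle u,x\rangle+\langle v,y\rangle-f(x,y)\}$. *)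

(* Defs.v *)
From HB Require Import structures.
From mathcomp Require Import all_boot all_order all_algebra.
From mathcomp Require Import all_classical all_reals all_analysis.
Set Implicit Arguments. Unset Strict Implicit. Unset Printing Implicit Defensive.
Import Order.TTheory GRing.Theory Num.Theory.
Import numFieldNormedType.Exports.
Local Open Scope classical_set_scope.
Local Open Scope ring_scope.

Section Defs.
Context {R : realType} {V : normedModType R}.

Definition convex_set_of (C : set V) : Prop :=
  forall a b, C a -> C b -> forall t : R, 0 <= t <= 1 -> C (t *: a + (1 - t) *: b).

Definition nearly_convex (O : set V) : Prop :=
  exists C : set V, [/\ convex_set_of C, C `<=` O & O `<=` closure C].

Definition aff (O : set V) : set V :=
  [set x | exists (k : nat) (pts : 'I_k -> V) (lam : 'I_k -> R),
     [/\ forall i, O (pts i), \sum_(i < k) lam i = 1 & x = \sum_(i < k) lam i *: pts i]].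

Definition ri (O : set V) : set V :=
  [set a | O a /\ exists2 d : R, 0 < d & ball a d `&` aff O `<=` O].
End Defs.

Section Fun.
Context {R : realType} {n p : nat}.
Local Open Scope ereal_scope.

Definition dotv (m : nat) (u x : 'rV[R]_m) : R := (\sum_(i < m) u ord0 i * x ord0 i)%R.

Definition dom (f : 'rV[R]_n * 'rV[R]_p -> \bar R) : set ('rV[R]_n * 'rV[R]_p) :=
  [set z | f z < +oo].

Definition epi (f : 'rV[R]_n * 'rV[R]_p -> \bar R) : set (('rV[R]_n * 'rV[R]_p) * R) :=
  [set zt | f zt.1 <= zt.2%:E].

Definition nearly_convex_fun (f : 'rV[R]_n * 'rV[R]_p -> \bar R) : Prop :=
  nearly_convex (epi f).

Definition proper_fun (f : 'rV[R]_n * 'rV[R]_p -> \bar R) : Prop :=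
  dom f !=set0 /\ forall z, -oo < f z.

Definition fconj (f : 'rV[R]_n * 'rV[R]_p -> \bar R) (uv : 'rV[R]_n * 'rV[R]_p) : \bar R :=
  ereal_sup [set ((dotv uv.1 xy.1 + dotv uv.2 xy.2)%R)%:E - f xy | xy in [set: 'rV[R]_n * 'rV[R]_p]].

Definition primal_val (f : 'rV[R]_n * 'rV[R]_p -> \bar R) : \bar R :=
  ereal_inf [set f (x, 0%R) | x in [set: 'rV[R]_n]].

Definition dual_val (f : 'rV[R]_n * 'rV[R]_p -> \bar R) : \bar R :=
  ereal_sup [set - fconj f (0%R, y) | y in [set: 'rV[R]_p]].
End Fun.

(* Main.v *)
Require Import Defs.
From mathcomp Require Import all_boot all_order all_algebra.
From mathcomp Require Import all_classical all_reals all_analysis.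
From mathcomp Require Import ring lra.
Import Order.TTheory GRing.Theory Num.Theory.
Import numFieldNormedType.Exports.
Local Open Scope classical_set_scope.
Local Open Scope ring_scope.
Set Implicit Arguments. Unset Strict Implicit. Unset Printing Implicit Defensive.


Lemma coord_le {R : realType} {p : nat} (z : 'rV[R]_p) i : `|z ord0 i| <= `|z|.
Proof.
have -> : `|z| = mx_norm z by [].
rewrite mx_normrE. exact: (le_bigmax _ _ (ord0, i)).
Qed.

Definition apx {R : realType} {p : nat} (D : set 'rV[R]_p) (z : 'rV[R]_p) :=
  forall e, 0 < e -> exists a, D a /\ `|a - z| < e.
Definition subsp {R : realType} {p : nat} (L : set 'rV[R]_p) :=
  [/\ L 0, (forall a b, L a -> L b -> L (a + b)) & (forall (c : R) a, L a -> L (c *: a))].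
Definition cvx {R : realType} {p : nat} (D : set 'rV[R]_p) :=
  forall a b (t : R), D a -> D b -> 0 <= t <= 1 -> D (t *: a + (1 - t) *: b).
Definition supp {R : realType} {p : nat} (k : nat) (z : 'rV[R]_p) :=
  forall i : 'I_p, (k <= i)%N -> z ord0 i = 0.

Lemma lemA {R : realType} {p : nat} (k : nat) : forall (L D : set 'rV[R]_p),
  subsp L -> (forall z, L z -> supp k z) -> cvx D -> D `<=` L ->
  forall d, 0 < d -> (forall z, L z -> `|z| < d -> apx D z) -> D 0.
Proof.
elim: k => [|k IH] L D sL Lk cD DL d d0 Lap.
  have L0 : forall z, L z -> z = 0.
    move=> z /Lk Hz; apply/matrixP => i j; rewrite (ord1 i) mxE; exact: Hz.
  case: sL => L00 _ _.
  have := Lap 0 L00; rewrite normr0 => /(_ d0 1 ltr01) [a [Da _]].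
  by rewrite -(L0 a (DL a Da)).
have [allk|] := pselect (forall z, L z -> supp k z).
  exact: (IH L D sL allk cD DL d d0 Lap).
move=> /existsNP [v /not_implyP [Lv /existsNP [i0 /not_implyP [ki0 vi0]]]].
have i0k : nat_of_ord i0 = k.
  apply/eqP; rewrite eqn_leq ki0 andbT leqNgt; apply/negP => H.
  by apply: vi0; apply: (Lk v Lv).
case: sL => L00 LD LZ.
set w := (v ord0 i0)^-1 *: v.
have vi0' : v ord0 i0 != 0 by apply/eqP.
have Lw : L w by apply: LZ.
have wi0 : w ord0 i0 = 1 by rewrite /w mxE mulVf.
set N := `|w|.
have N0 : 0 <= N by rewrite /N normr_ge0.
set eps := d / (2 * (N + 1)).
have eps0 : 0 < eps by rewrite /eps divr_gt0 // mulr_gt0 // ltr_pwDr.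
have epsN : eps * N < d / 2.
  have -> : eps * N = (d / 2) * (N / (N + 1)).
    rewrite /eps; field; apply: lt0r_neq0; lra.
  have h1 : N / (N + 1) < 1 by rewrite ltr_pdivrMr; lra.
  have h2 : 0 < d / 2 by lra.
  nra.
pose L0 := [set z | L z /\ z ord0 i0 = 0].
pose D0 := [set z | D z /\ z ord0 i0 = 0].
suff : D0 0 by case.
apply: (IH L0 D0 _ _ _ _ (d / 2)).
- split; first by split => //; rewrite mxE.
  + by move=> a b [La a0] [Lb b0]; split; [exact: LD | rewrite mxE a0 b0 addr0].
  + by move=> c a [La a0]; split; [exact: LZ | rewrite mxE a0 mulr0].
- move=> z [Lz z0] i ki.
  case: (eqVneq i i0) => [->//|ne]; apply: (Lk z Lz).
  rewrite ltn_neqAle ki andbT; apply/negP => /eqP ek; move: ne.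
  by apply/negP; rewrite negbK; apply/eqP/val_inj; rewrite /= -ek i0k.
- move=> a b t [Da a0] [Db b0] t01; split; first exact: cD.
  by rewrite !mxE a0 b0 !mulr0 addr0.
- by move=> z [Dz z0]; split => //; exact: DL.
- lra.
move=> z [Lz zi0] zd e e0.
pose eta := Num.min (eps / 2) (e / (1 + 2 * N)).
have eta0 : 0 < eta by rewrite lt_min divr_gt0 //= divr_gt0 //; lra.
have eta1 : eta <= eps / 2 by rewrite ge_min lexx.
have eta2 : eta <= e / (1 + 2 * N) by rewrite ge_min lexx orbT.
have eta3 : eta * (1 + 2 * N) <= e by rewrite -ler_pdivlMr //; lra.
have Lp : L (z + eps *: w) by apply: LD => //; exact: LZ.
have Lm : L (z + (- eps) *: w) by apply: LD => //; exact: LZ.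
have nw : `|eps *: w| = eps * N by rewrite normrZ gtr0_norm.
have nw' : `|(- eps) *: w| = eps * N by rewrite normrZ normrN gtr0_norm.
have ha : apx D (z + eps *: w).
  apply: Lap => //; apply: (le_lt_trans (ler_normD _ _)); rewrite nw; lra.
have hb : apx D (z + (- eps) *: w).
  apply: Lap => //; apply: (le_lt_trans (ler_normD _ _)); rewrite nw'; lra.
have {ha}[a [Da ha']] := ha eta eta0.
have {hb}[b [Db hb']] := hb eta eta0.
pose ai := a ord0 i0; pose bi := b ord0 i0.
have hai : `|ai - eps| < eta.
  apply: le_lt_trans ha'; apply: le_trans (coord_le _ i0).
  by rewrite !mxE zi0 mulVf // add0r mulr1.
have hbi : `|bi + eps| < eta.
  apply: le_lt_trans hb'; apply: le_trans (coord_le _ i0).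
  by rewrite !mxE zi0 mulVf // add0r mulr1 opprK.
move: hai hbi; rewrite !ltr_norml => /andP [hai1 hai2] /andP [hbi1 hbi2].
have abp : 0 < ai - bi by lra.
pose lam := - bi / (ai - bi).
have lam0 : 0 <= lam by rewrite divr_ge0 //; lra.
have lam1 : lam <= 1 by rewrite ler_pdivrMr //; lra.
exists (lam *: a + (1 - lam) *: b); split.
  split; first by apply: cD => //; rewrite lam0 lam1.
  rewrite !mxE -/ai -/bi /lam; field; lra.
have -> : lam *: a + (1 - lam) *: b - z = lam *: (a - (z + eps *: w)) +
   (1 - lam) *: (b - (z + (- eps) *: w)) + ((2 * lam - 1) * eps) *: w.
  apply/matrixP => i j; rewrite !mxE; ring.
have e1 : (2 * lam - 1) * eps = - (ai + bi) * (eps / (ai - bi)).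
  rewrite /lam; field; lra.
have e2 : eps / (ai - bi) <= 1 by rewrite ler_pdivrMr //; lra.
have e3 : 0 <= eps / (ai - bi) by rewrite divr_ge0 //; lra.
have e4 : `|(2 * lam - 1) * eps| <= 2 * eta.
  rewrite e1 normrM (ger0_norm e3) normrN.
  have : `|ai + bi| < 2 * eta by rewrite ltr_norml; apply/andP; split; lra.
  have := normr_ge0 (ai + bi). nra.
apply: (le_lt_trans (ler_normD _ _)).
rewrite normrZ -/N.
apply: (@le_lt_trans _ _ (lam * `|a - (z + eps *: w)| + (1 - lam) * `|b - (z + - eps *: w)| + 2 * eta * N)).
  apply: lerD; last by apply: ler_wpM2r.
  have l2 : 0 <= 1 - lam by lra.
  by apply: (le_trans (ler_normD _ _)); rewrite (normrZ lam) (normrZ (1 - lam)) (ger0_norm lam0) (ger0_norm l2).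
have lam0' : 0 < lam by rewrite divr_gt0 //; lra.
have h1 : lam * `|a - (z + eps *: w)| < lam * eta by rewrite ltr_pM2l.
have h2 : (1 - lam) * `|b - (z + - eps *: w)| <= (1 - lam) * eta.
  by apply: ler_wpM2l; [lra | exact: ltW].
have eta4 : eta + 2 * eta * N <= e by move: eta3; rewrite mulrDr mulr1 mulrA (mulrC eta 2).
lra.
Qed.

Lemma lemB {R : realType} {p : nat} (L D : set 'rV[R]_p) :
  subsp L -> cvx D -> D `<=` L -> forall d, 0 < d ->
  (forall z, L z -> `|z| < d -> apx D z) ->
  forall y, D y -> exists2 mu : R, 0 < mu & D ((- mu) *: y).
Proof.
move=> sL cD DL d d0 Lap y Dy.
have Ly := DL y Dy.
case: (sL) => L00 LD LZ.
set N := `|y|.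
have N0 : 0 <= N by rewrite /N normr_ge0.
pose mu := d / (2 * (N + 1)).
have mu0 : 0 < mu by rewrite /mu divr_gt0 // mulr_gt0 // ltr_pwDr.
have muN : mu * N < d / 2.
  have -> : mu * N = (d / 2) * (N / (N + 1)).
    rewrite /mu; field; apply: lt0r_neq0; lra.
  have h1 : N / (N + 1) < 1 by rewrite ltr_pdivrMr; lra.
  have h2 : 0 < d / 2 by lra.
  nra.
exists mu => //.
pose D' := [set z | D (z - mu *: y)].
suff : D' 0 by rewrite /D' /= sub0r -scaleNr.
apply: (@lemA R p p L D' sL _ _ _ (d / 2)).
- by move=> z _ i; rewrite leqNgt ltn_ord.
- move=> a b t Da Db t01; rewrite /D' /=.
  have -> : t *: a + (1 - t) *: b - mu *: y = t *: (a - mu *: y) + (1 - t) *: (b - mu *: y).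
    by apply/matrixP => i j; rewrite !mxE; ring.
  exact: cD.
- move=> z Dz; have := DL _ Dz => Lz.
  have -> : z = (z - mu *: y) + mu *: y by rewrite subrK.
  by apply: LD => //; exact: LZ.
- lra.
move=> z Lz zd e e0.
have Lz' : L (z + (- mu) *: y) by apply: LD => //; exact: LZ.
have : apx D (z + (- mu) *: y).
  apply: Lap => //; apply: (le_lt_trans (ler_normD _ _)).
  rewrite normrZ normrN gtr0_norm // -/N; lra.
move=> /(_ e e0) [a [Da ha]].
exists (a + mu *: y); split.
  by rewrite /D' /= addrK.
by move: ha; rewrite scaleNr opprD opprK addrA (addrAC a).
Qed.

Lemma dotvDl {R : realType} {m : nat} (u v y : 'rV[R]_m) :
  dotv (u + v) y = dotv u y + dotv v y.
Proof. by rewrite /dotv -big_split; apply: eq_bigr => i _; rewrite mxE mulrDl. Qed.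

Lemma dotvZl {R : realType} {m : nat} (c : R) (u y : 'rV[R]_m) :
  dotv (c *: u) y = c * dotv u y.
Proof. by rewrite /dotv mulr_sumr; apply: eq_bigr => i _; rewrite mxE mulrA. Qed.

Lemma dotv_comb {R : realType} {m : nat} (u a b : 'rV[R]_m) (s t : R) :
  dotv u (s *: a + t *: b) = s * dotv u a + t * dotv u b.
Proof.
rewrite /dotv !mulr_sumr -big_split; apply: eq_bigr => i _; rewrite !mxE /=; ring.
Qed.

Lemma dotv0r {R : realType} {m : nat} (u : 'rV[R]_m) : dotv u 0 = 0.
Proof. by rewrite /dotv big1 // => i _; rewrite mxE mulr0. Qed.

Lemma dotv0l {R : realType} {m : nat} (u : 'rV[R]_m) : dotv 0 u = 0.
Proof. by rewrite /dotv big1 // => i _; rewrite mxE mul0r. Qed.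

Lemma dotv_delta {R : realType} {m : nat} (i0 : 'I_m) (y : 'rV[R]_m) :
  dotv (delta_mx ord0 i0) y = y ord0 i0.
Proof.
rewrite /dotv (bigD1 i0) //= big1 ?addr0; first by rewrite mxE !eqxx mul1r.
by move=> i /negbTE ni; rewrite mxE ni andbF mul0r.
Qed.

Lemma lemHB {R : realType} {p : nat} (K : 'rV[R]_p -> R -> Prop) (m : R) :
  (forall a ta b tb (l : R), K a ta -> K b tb -> 0 <= l <= 1 ->
     K (l *: a + (1 - l) *: b) (l * ta + (1 - l) * tb)) ->
  (forall y t, K y t -> exists2 mu : R, 0 < mu & exists t', K ((- mu) *: y) t') ->
  (forall t, K 0 t -> m <= t) ->
  exists u, forall y t, K y t -> m + dotv u y <= t.
Proof.
move=> cK core bot.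
suff H : forall k, (k <= p)%N -> exists u, forall y t, K y t -> supp k y -> m + dotv u y <= t.
  have [u Hu] := H p (leqnn p); exists u => y t Kyt; apply: Hu Kyt _ => i.
  by rewrite leqNgt ltn_ord.
elim => [_|k IH kp].
  exists 0 => y t Kyt s0.
  have y0 : y = 0 by apply/matrixP => i j; rewrite (ord1 i) mxE; exact: s0.
  by rewrite dotv0l addr0; apply: bot; rewrite -y0.
have [u Hu] := IH (ltnW kp).
pose i0 := Ordinal kp.
pose g y t := t - m - dotv u y.
pose A := [set r | exists y t, [/\ K y t, supp k.+1 y, y ord0 i0 < 0 & r = g y t / y ord0 i0]].
pose B := [set r | exists y t, [/\ K y t, supp k.+1 y, 0 < y ord0 i0 & r = g y t / y ord0 i0]].
have AB : forall r s, A r -> B s -> r <= s.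
  move=> r s [a [ta [Ka sa an ->]]] [b [tb [Kb sb bp ->]]].
  pose ak : R := a ord0 i0; pose bk : R := b ord0 i0.
  have an' : ak < 0 := an.
  have bp' : 0 < bk := bp.
  have bap : 0 < bk - ak by lra.
  pose l := bk / (bk - ak).
  have l0 : 0 <= l by rewrite divr_ge0 //; lra.
  have l1 : l <= 1 by rewrite ler_pdivrMr //; lra.
  have H : m + dotv u (l *: a + (1 - l) *: b) <= l * ta + (1 - l) * tb.
    apply: Hu; first by apply: cK => //; rewrite l0 l1.
    move=> i ki; rewrite !mxE.
    case: (eqVneq i i0) => [->|ne].
      rewrite -/ak -/bk /l; field; lra.
    have ki' : (k.+1 <= i)%N.
      rewrite ltn_neqAle ki andbT; apply/negP => /eqP ek; move: ne.
      by apply/negP; rewrite negbK; apply/eqP/val_inj; rewrite /= -ek.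
    by rewrite (sa i ki') (sb i ki') !mulr0 addr0.
  rewrite dotv_comb in H.
  have H1 : 0 <= l * g a ta + (1 - l) * g b tb.
    rewrite /g; move: H; set da := dotv u a; set db := dotv u b.
    have -> : l * (ta - m - da) + (1 - l) * (tb - m - db) =
       (l * ta + (1 - l) * tb) - (m + (l * da + (1 - l) * db)) by ring.
    by rewrite subr_ge0.
  have H2 : bk * g a ta - ak * g b tb = (bk - ak) * (l * g a ta + (1 - l) * g b tb).
    rewrite /l; field; lra.
  have H3 : 0 <= bk * g a ta - ak * g b tb by rewrite H2 mulr_ge0 //; lra.
  have H4 : g a ta / ak - g b tb / bk = (bk * g a ta - ak * g b tb) * (ak * bk)^-1.
    by field; rewrite (lt0r_neq0 bp') (ltr0_neq0 an').
  change (g a ta / ak <= g b tb / bk).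
  rewrite -subr_le0 H4; apply: mulr_ge0_le0 => //.
  rewrite invr_le0; apply: ltW; rewrite nmulr_rlt0 //.
have [c [cA cB]] : exists c, (forall r, A r -> r <= c) /\ (forall s, B s -> c <= s).
  case: (pselect (A !=set0)) => [An|A0].
    have [s Bs] : B !=set0.
      case: An => r [a [ta [Ka sa an _]]].
      have [mu mu0 [t' Kt']] := core _ _ Ka.
      exists (g ((- mu) *: a) t' / ((- mu) *: a) ord0 i0), ((- mu) *: a), t'; split => //.
      - by move=> i ki; rewrite mxE sa // mulr0.
      - by rewrite mxE mulNr -mulrN mulr_gt0 // oppr_gt0.
    have ubA : ubound A s by move=> r Ar; exact: AB.
    exists (sup A); split.
      by move=> r Ar; apply: ub_le_sup => //; exists s.
    by move=> s' Bs'; apply: ge_sup => // r Ar; exact: AB.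
  exists 0; split; first by move=> r Ar; exfalso; apply: A0; exists r.
  move=> s [b [tb [Kb sb bp _]]]; exfalso; apply: A0.
  have [mu mu0 [t' Kt']] := core _ _ Kb.
  exists (g ((- mu) *: b) t' / ((- mu) *: b) ord0 i0), ((- mu) *: b), t'; split => //.
  - by move=> i ki; rewrite mxE sb // mulr0.
  - by rewrite mxE mulNr oppr_lt0 mulr_gt0.
exists (u + c *: delta_mx ord0 i0) => y t Kyt sy.
rewrite dotvDl dotvZl dotv_delta.
have key : c * y ord0 i0 <= g y t.
  case: (ltrgtP (y ord0 i0) 0) => [yn|yp|y0].
  - have := cA _ (ex_intro _ y (ex_intro _ t (And4 Kyt sy yn erefl))).
    by rewrite ler_ndivrMr // mulrC.
  - have := cB _ (ex_intro _ y (ex_intro _ t (And4 Kyt sy yp erefl))).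
    by rewrite ler_pdivlMr // mulrC.
  - rewrite y0 mulr0 /g; suff : m + dotv u y <= t by lra.
    apply: Hu => // i ki.
    case: (eqVneq i i0) => [->//|ne]; apply: sy.
    rewrite ltn_neqAle ki andbT; apply/negP => /eqP ek; move: ne.
    by apply/negP; rewrite negbK; apply/eqP/val_inj; rewrite /= -ek.
move: key; rewrite /g; lra.
Qed.

Lemma dotvBr {R : realType} {m : nat} (u a b : 'rV[R]_m) :
  dotv u (a - b) = dotv u a - dotv u b.
Proof. by rewrite /dotv -sumrB; apply: eq_bigr => i _; rewrite !mxE mulrBr. Qed.

Lemma dotv_bound {R : realType} {m : nat} (u v : 'rV[R]_m) :
  `|dotv u v| <= (\sum_i `|u ord0 i|) * `|v|.
Proof.
rewrite /dotv mulr_suml; apply: (le_trans (ler_norm_sum _ _ _)).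
by apply: ler_sum => i _; rewrite normrM ler_wpM2l // coord_le.
Qed.

Definition spn {R : realType} {p : nat} (S : set 'rV[R]_p) :=
  [set z | exists k (pts : 'I_k -> 'rV[R]_p) (lam : 'I_k -> R),
     (forall i, S (pts i)) /\ z = \sum_(i < k) lam i *: pts i].

Lemma spn_subsp {R : realType} {p : nat} (S : set 'rV[R]_p) : subsp (spn S).
Proof.
split.
- by exists 0%N, (fun _ => 0), (fun _ => 0); split; [case | rewrite big_ord0].
- move=> a b [k1 [p1 [l1 [S1 ->]]]] [k2 [p2 [l2 [S2 ->]]]].
  exists (k1 + k2)%N, (fun i => match fintype.split i with inl a => p1 a | inr b => p2 b end),
    (fun i => match fintype.split i with inl a => l1 a | inr b => l2 b end); split.
    by move=> i; case: (fintype.split i).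
  rewrite big_split_ord /=; congr (_ + _); apply: eq_bigr => i _.
    by rewrite (unsplitK (inl i)).
  by rewrite (unsplitK (inr i)).
- move=> c a [k [pt [l [Sp ->]]]].
  exists k, pt, (fun i => c * l i); split => //.
  by rewrite scaler_sumr; apply: eq_bigr => i _; rewrite scalerA.
Qed.

Lemma S_spn {R : realType} {p : nat} (S : set 'rV[R]_p) : S `<=` spn S.
Proof.
move=> z Sz; exists 1%N, (fun _ => z), (fun _ => 1); split => //.
by rewrite big_ord1 scale1r.
Qed.

Lemma spn_aff {R : realType} {p : nat} (S : set 'rV[R]_p) : S 0 -> spn S `<=` aff S.
Proof.
move=> S0 z [k [pt [l [Sp ->]]]].
exists k.+1, (fun i => if unlift ord0 i is Some j then pt j else 0),
  (fun i => if unlift ord0 i is Some j then l j else 1 - \sum_(j < k) l j); split.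
- by move=> i; case: (unlift ord0 i).
- rewrite big_ord_recl unlift_none.
  rewrite [X in _ + X](eq_bigr l); first by rewrite subrK.
  by move=> i _; rewrite (liftK ord0 i).
- rewrite big_ord_recl unlift_none scaler0 add0r.
  by apply: eq_bigr => i _; rewrite (liftK ord0 i).
Qed.

Unset Implicit Arguments.

Lemma cl_near {R : realType} {n p : nat} (C : set (('rV[R]_n * 'rV[R]_p) * R)) q e :
  closure C q -> 0 < e -> exists w, C w /\ `|q.1.2 - w.1.2| < e /\ `|q.2 - w.2| < e.
Proof.
move=> /(_ _ (nbhsx_ballx q e _)) H e0; have [w [Cw bw]] := H e0.
exists w; split => //.
move: bw; rewrite /ball /= /prod_ball /= => -[[_ b1] b2].
by move: b1 b2; rewrite -!ball_normE.
Qed.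

Theorem corollary7p2 (R : realType) (n p : nat)
  (f : 'rV[R]_n * 'rV[R]_p -> \bar R) :
  proper_fun f -> nearly_convex_fun f ->
  ri (snd @` dom f) (0 : 'rV[R]_p) ->
  primal_val f = dual_val f.
Proof.
move=> [_ fpr] [C [cC Csub subcl]] [S0 [δ δ0 Hri]].
set S := snd @` dom f in S0 Hri.
have weak : (dual_val f <= primal_val f)%E.
  apply: ge_ereal_sup => _ [y _ <-].
  apply: le_ereal_inf_tmp => _ [x _ <-].
  rewrite leeNl; apply: le_ereal_sup_tmp.
  exists ((dotv 0 x + dotv y 0)%:E - f (x, 0%R))%E; first by exists (x, 0%R).
  by rewrite dotv0l dotv0r addr0 sub0e.
apply/eqP; rewrite eq_le weak andbT.
have [z0 [dz0 z02]] := S0.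
have Pfin : (primal_val f < +oo)%E.
  apply: (le_lt_trans _ dz0); apply: ereal_inf_lbound; exists z0.1 => //.
  by rewrite -z02 -surjective_pairing.
case Pe : (primal_val f) => [m| |]; last by rewrite leNye.
  2: by rewrite Pe in Pfin.
have bot0 : forall x t, C ((x, 0%R), t) -> m <= t.
  move=> x t Cxt; have := Csub _ Cxt; rewrite /epi /= => fle.
  rewrite -lee_fin -Pe; apply: le_trans fle; apply: ereal_inf_lbound; by exists x.
pose K (y : 'rV[R]_p) (t : R) := exists x, C ((x, y), t).
pose D := [set y | exists t, K y t].
have cK : forall a ta b tb (l : R), K a ta -> K b tb -> 0 <= l <= 1 ->
    K (l *: a + (1 - l) *: b) (l * ta + (1 - l) * tb).
  move=> a ta b tb l [xa Ca] [xb Cb] l01; exists (l *: xa + (1 - l) *: xb).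
  exact: (cC _ _ Ca Cb l l01).
have DS : D `<=` S.
  move=> y [t [x Cx]]; exists (x, y) => //; have := Csub _ Cx; rewrite /epi /dom /= => h.
  by apply: le_lt_trans h _; exact: ltry.
have Lsub : subsp (spn S) := spn_subsp S.
have Lap : forall z, spn S z -> `|z| < δ -> apx D z.
  move=> z Lz zd e e0.
  have Sz : S z.
    by apply: Hri; split; [rewrite -ball_normE /= sub0r normrN | exact: spn_aff].
  have [[x y] dxy yz] := Sz; simpl in yz; subst z.
  case Ef: (f (x, y)) => [r| |]; last by have := fpr (x, y); rewrite Ef.
    have : closure C ((x, y), r) by apply: subcl; rewrite /epi /= Ef.
    move=> /(@cl_near R n p C _ e) /(_ e0) [w [Cw [h1 _]]].
    exists w.1.2; split; first by exists w.2, w.1.1; rewrite -!surjective_pairing.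
    by rewrite distrC.
  by move: dxy; rewrite /dom /= Ef.
have cD : cvx D.
  move=> a b l [ta Ka] [tb Kb] l01; exists (l * ta + (1 - l) * tb); exact: cK.
have core : forall y t, K y t -> exists2 mu : R, 0 < mu & exists t', K ((- mu) *: y) t'.
  move=> y t Kyt.
  have [mu mu0 [t' Kt']] := lemB Lsub cD (fun y Dy => S_spn (DS y Dy)) δ0 Lap (ex_intro _ t Kyt).
  by exists mu => //; exists t'.
have bot : forall t, K 0 t -> m <= t by move=> t [x Cx]; exact: bot0 Cx.
have [u Hu] := lemHB cK core bot.
have Hcl : forall x y r, f (x, y) = r%:E -> m + dotv u y <= r.
  move=> x y r Ef.
  have cl : closure C ((x, y), r) by apply: subcl; rewrite /epi /= Ef.
  rewrite leNgt; apply/negP => gap.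
  pose Sg := \sum_i `|u ord0 i|.
  have Sg0 : 0 <= Sg by apply: sumr_ge0 => i _.
  pose e := (m + dotv u y - r) / (2 * (Sg + 1)).
  have e0 : 0 < e by rewrite /e divr_gt0 //; lra.
  have [w [Cw [h1 h2]]] := @cl_near R n p C _ e cl e0.
  have Kw : K w.1.2 w.2 by exists w.1.1; rewrite -!surjective_pairing.
  have := Hu _ _ Kw.
  have hd := dotv_bound u (y - w.1.2); rewrite dotvBr in hd.
  simpl in h1, h2.
  have he : Sg * e + e = (m + dotv u y - r) / 2 by rewrite /e; field; lra.
  have hS : Sg * `|y - w.1.2| <= Sg * e by rewrite ler_wpM2l // ltW.
  move: h2 hd; rewrite ltr_norml ler_norml -/Sg => /andP [h2 h2'] /andP [hd hd'].
  lra.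
apply: le_ereal_sup_tmp; exists (- fconj f (0%R, u))%E; first by exists u.
rewrite leeNr; apply: ge_ereal_sup => _ [[x y] _ <-].
rewrite /= dotv0l add0r.
case Ef: (f (x, y)) => [r| |].
- by rewrite -EFinD lee_fin; have := Hcl x y r Ef; lra.
- by rewrite addeNy leNye.
- by have := fpr (x, y); rewrite Ef.
Qed.
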